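(* There is an absolute constant $c>0$ such that for all integers $n\ge 2$, $1\le k<n$, $d\ge 2k$ and $t\ge1$ with $(d+1)\mid t$, every binary $t\times n$ matrix $M$ that is $d$-runlength constrained and is a (zero-error) QNAGT scheme for $k$ defectives satisfies $$t\ge c\,\frac{d\log(n/k)}{\log(d^2/k)}.$$
   Context: $\log$ denotes the base-2 logarithm. A binary $t\times n$ matrix $M$ is $d$-runlength constrained if in every column, any two $1$'s are separated by a run of at least $d$ zeros, i.e. $M_{ij}=M_{i'j}=1$ with $i<i'$ implies $i'-i\ge d+1$. A vector is $k$-sparse if its Hamming weight is at most $k$. $M$ is a zero-error QNAGT scheme for $k$ defectives if $Mx\ne Mx'$ (real matrix-vector product) for all distinct $k$-sparse $x,x'\in\{0,1\}^n$. *)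

(* Defs.v *)
From mathcomp Require Import all_boot all_algebra.
From Stdlib Require Import Reals.

Set Implicit Arguments.
Unset Strict Implicit.
Unset Printing Implicit Defensive.

Definition log2 (x : R) : R := (ln x / ln 2)%R.

Definition ksparse (n k : nat) (x : {ffun 'I_n -> bool}) : bool :=
  (#|[set j | x j]| <= k)%N.

(* Real (integer) matrix-vector product M x for binary M and x; entries are
   nonnegative integers, so computing in nat is exact. *)
Definition mxvec_bin (t n : nat) (M : 'M[bool]_(t, n)) (x : {ffun 'I_n -> bool})
  : {ffun 'I_t -> nat} :=
  [ffun i => (\sum_(j < n) (M i j : nat) * (x j : nat))%N].

Definition runlength_constrained (t n d : nat) (M : 'M[bool]_(t, n)) : Prop :=
  forall (j : 'I_n) (i i' : 'I_t),
    M i j -> M i' j -> (i < i')%N -> (d.+1 <= i' - i)%N.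

Definition QNAGT (t n k : nat) (M : 'M[bool]_(t, n)) : Prop :=
  forall x x' : {ffun 'I_n -> bool},
    ksparse k x -> ksparse k x' -> x != x' -> mxvec_bin M x != mxvec_bin M x'.

(* Main.v *)
Require Import Defs.
From mathcomp Require Import all_boot all_algebra.
From Stdlib Require Import Reals.
From Stdlib Require Import Lra Lia Psatz.
From mathcomp Require Import zify.
Set Implicit Arguments. Unset Strict Implicit.

Section RealPart.
Local Open Scope R_scope.

Lemma ln_le' x y : 0 < x -> x <= y -> ln x <= ln y.
Proof. intros Hx [H|H]. left; apply ln_increasing; lra. subst; lra. Qed.

Lemma real_part (n k d m : nat) :
  (1 <= k)%coq_nat -> (k < n)%coq_nat -> (2 * k <= d)%coq_nat -> (n <= Nat.pow (d+2) m)%coq_nat ->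
  1 * (INR d * log2 (INR n / INR k)) / log2 (INR d ^ 2 / INR k) <= INR (m * (d+1)).
Proof.
  intros Hk Hkn Hd Hn.
  assert (Hk1 : 1 <= INR k) by (apply (le_INR 1); lia).
  assert (Hnk : INR k < INR n) by (apply lt_INR; lia).
  assert (Hd2 : 2 * INR k <= INR d) by (replace 2 with (INR 2) by (simpl; lra); rewrite -mult_INR; apply le_INR; lia).
  assert (Hnle : INR n <= (INR d + 2) ^ m).
  { replace (INR d + 2) with (INR (d+2)) by (rewrite plus_INR; simpl; lra). rewrite -pow_INR. apply le_INR; lia. }
  assert (Hln2 : 0 < ln 2) by (pose proof ln_lt_2; lra).
  set (L := ln (INR d + 2)).
  assert (HL : 0 < L). { unfold L. rewrite -ln_1. apply ln_increasing; lra. }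
  set (A := ln (INR d ^ 2 / INR k)).
  assert (HA : L <= A).
  { unfold L, A. apply ln_le'. lra. apply (Rmult_le_reg_r (INR k)). lra.
    unfold Rdiv. rewrite Rmult_assoc Rinv_l; last lra. nra. }
  assert (HlnB : ln (INR n / INR k) <= ln (INR n)).
  { apply ln_le'. apply Rdiv_lt_0_compat; lra. apply (Rmult_le_reg_r (INR k)). lra.
    unfold Rdiv. rewrite Rmult_assoc Rinv_l; last lra. nra. }
  assert (Hlnpos : 0 <= ln (INR n / INR k)).
  { rewrite -ln_1. apply ln_le'. lra. apply (Rmult_le_reg_r (INR k)). lra.
    unfold Rdiv. rewrite Rmult_assoc Rinv_l; last lra. nra. }
  assert (Hlnn : ln (INR n) <= INR m * L).
  { unfold L. rewrite -ln_pow; last lra. apply ln_le'; lra. }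
  assert (Hd0 : 0 <= INR d) by apply pos_INR.
  assert (Hm0 : 0 <= INR m) by apply pos_INR.
  assert (K1 : INR d * ln (INR n / INR k) <= INR d * (INR m * L)) by
    (apply Rmult_le_compat_l; lra).
  assert (K2 : INR d * (INR m * L) <= INR m * (INR d + 1) * A).
  { assert (0 <= INR m * L) by (apply Rmult_le_pos; lra).
    assert (INR m * L <= INR m * A) by (apply Rmult_le_compat_l; lra). nra. }
  assert (Key : INR d * ln (INR n / INR k) <= INR m * (INR d + 1) * A) by lra.
  rewrite mult_INR plus_INR. simpl (INR 1).
  unfold log2. fold A.
  replace (1 * (INR d * (ln (INR n / INR k) / ln 2)) / (A / ln 2))
    with (INR d * ln (INR n / INR k) / A) by (field; lra).
  apply (Rmult_le_reg_r A). lra.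
  unfold Rdiv. rewrite Rmult_assoc Rinv_l; last lra. lra.
Qed.

End RealPart.

Set Implicit Arguments. Unset Strict Implicit.

Lemma powE a m : Nat.pow a m = expn a m.
Proof. elim: m => // m IH; by rewrite expnS -IH. Qed.

Section S.
Variables (t n d : nat) (M : 'M[bool]_(t, n)).

Definition Mn (i : nat) (j : 'I_n) : bool :=
  if @insub _ (fun x => x < t) _ i is Some i' then M i' j else false.

Lemma MnE (i : 'I_t) j : Mn i j = M i j.
Proof. by rewrite /Mn valK. Qed.

Lemma Mn_lt i j : Mn i j -> i < t.
Proof. by rewrite /Mn; case: insubP. Qed.

Hypothesis RL : runlength_constrained d M.

Lemma block_uniq a r1 r2 j : r1 < d.+1 -> r2 < d.+1 ->
  Mn (a * d.+1 + r1) j -> Mn (a * d.+1 + r2) j -> r1 = r2.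
Proof.
move=> h1 h2 H1 H2.
have l1 := Mn_lt H1; have l2 := Mn_lt H2.
move: H1 H2; rewrite -[a * d.+1 + r1]/(val (Ordinal l1)) -[a * d.+1 + r2]/(val (Ordinal l2)) !MnE => H1 H2.
case: (ltngtP r1 r2) => // hr.
  have := RL H1 H2; rewrite /= ltn_add2l => /(_ hr); lia.
have := RL H2 H1; rewrite /= ltn_add2l => /(_ hr); lia.
Qed.

Definition m := t %/ d.+1.

Definition fcol (j : 'I_n) : {ffun 'I_m -> option 'I_d.+1} :=
  [ffun b : 'I_m => [pick r : 'I_d.+1 | Mn (b * d.+1 + r) j]].

Hypothesis Hdiv : d.+1 %| t.

Lemma fcol_half j1 j2 (i : 'I_t) : fcol j1 = fcol j2 -> M i j1 -> M i j2.
Proof.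
move=> E Hi.
have hb : i %/ d.+1 < m.
  rewrite /m; have hi := ltn_ord i; move: (Hdiv) (i : nat) hi => /dvdnP [q ->] x hi.
  by rewrite mulnK // ltn_divLR.
set b : 'I_m := Ordinal hb.
have hr : i %% d.+1 < d.+1 by rewrite ltn_mod.
set r : 'I_d.+1 := Ordinal hr.
have ei : (i : nat) = b * d.+1 + r by rewrite /= -divn_eq.
have H1 : Mn (b * d.+1 + r) j1 by rewrite -ei MnE.
have : fcol j1 b = fcol j2 b by rewrite E.
rewrite !ffunE.
case: pickP => [r1 Hr1|/(_ r)]; last by rewrite H1.
have er : r1 = r by apply: val_inj; apply: (block_uniq (ltn_ord _) (ltn_ord _) Hr1 H1).
subst r1.
case: pickP => [r2 Hr2 [er2]|//].
by rewrite -MnE ei er2.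
Qed.

Lemma fcol_inj_col j1 j2 : fcol j1 = fcol j2 -> forall i, M i j1 = M i j2.
Proof.
move=> E i; apply/idP/idP; first exact: fcol_half.
by apply: fcol_half; rewrite E.
Qed.

Definition ev (j : 'I_n) : {ffun 'I_n -> bool} := [ffun l => l == j].

Lemma mxvec_ev j : mxvec_bin M (ev j) = [ffun i => nat_of_bool (M i j)].
Proof.
apply/ffunP => i; rewrite !ffunE (bigD1 j) //= big1 ?addn0 ?ffunE ?eqxx ?muln1 //.
by move=> l /negbTE hl; rewrite ffunE hl muln0.
Qed.

Lemma card_bound k : 1 <= k -> QNAGT k M -> n <= (d.+2) ^ m.
Proof.
move=> hk Q.
have inj : injective fcol.
  move=> j1 j2 E; apply/eqP; apply: contraT => ne.
  have sp j : ksparse k (ev j).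
    rewrite /ksparse; apply: leq_trans hk.
    rewrite (_ : [set l | ev j l] = [set j]) ?cards1 //.
    by apply/setP => l; rewrite !inE ffunE.
  have ne' : ev j1 != ev j2.
    apply: contra ne => /eqP E2.
    have : ev j1 j1 = ev j2 j1 by rewrite E2.
    by rewrite !ffunE eqxx eq_sym => <-.
  have := Q _ _ (sp j1) (sp j2) ne'.
  rewrite !mxvec_ev; suff -> : [ffun i => nat_of_bool (M i j1)] = [ffun i => nat_of_bool (M i j2)] by rewrite eqxx.
  by apply/ffunP => i; rewrite !ffunE (fcol_inj_col E).
have := leq_card _ inj.
by rewrite card_ffun card_option !card_ord powE.
Qed.
End S.



Theorem theorem6 :
  exists c : R, (0 < c)%R /\
    forall (n k d t : nat) (M : 'M[bool]_(t, n)),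
      (2 <= n)%N -> (1 <= k)%N -> (k < n)%N -> (2 * k <= d)%N -> (1 <= t)%N ->
      (d.+1 %| t)%N ->
      runlength_constrained d M -> QNAGT k M ->
      (c * (INR d * log2 (INR n / INR k)) / log2 (INR d ^ 2 / INR k) <= INR t)%R.
Proof.
exists 1%R; split; first lra.
move=> n k d t M h2n hk hkn hd ht hdiv RL Q.
have cb := card_bound RL hdiv hk Q.
have -> : t = (m t d * (d + 1))%coq_nat by rewrite ?plusE ?multE addn1 divnK.
apply: real_part; try lia.
by apply/leP; rewrite addn2.
Qed.
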